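(* For every positive integer $n$ there exists a function $f_n:\mathbb Z\to\omega$ such that for all $l,d<\omega$ there exists $m<\omega$ such that for every $p:n\to\mathbb Z$ with $\max\{|p(k)-p(k')|\mid k<k'<n\}\le d$ there exists $i<m$ with $f_n(p(k)+i)=l$ for every $k<n$.
   Context: Here $n=\{0,\dots,n-1\}$ and $\omega$ is the set of natural numbers; for $n=1$ the maximum over the empty set is taken to be $0$. *)

(* Defs.v *)
From mathcomp Require Import all_boot all_order all_algebra.
Set Implicit Arguments. Unset Strict Implicit. Unset Printing Implicit Defensive.

(* Main.v *)
Require Import Defs.
From mathcomp Require Import all_boot all_order all_algebra.
From mathcomp Require Import zify ring lra.
From Stdlib Require Import ClassicalDescription.
Import Order.TTheory GRing.Theory Num.Theory.

Definition digitn (B j X : nat) : nat := (X %/ B ^ j) %% B.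

Lemma digit_low B j v s q : 0 < B -> j < v ->
  digitn B j (s + q * B ^ v) = digitn B j s.
Proof.
move=> B0 jv; rewrite /digitn.
have -> : B ^ v = (B ^ (v - j).-1 * B) * B ^ j.
  by rewrite -expnSr prednK ?subn_gt0 // -expnD subnK // ltnW.
rewrite addnC.

rewrite (mulnA q) divnMDl ?expn_gt0 ?B0 //.
by rewrite mulnA modnMDl.
Qed.

Lemma digit_top B v s q : q < B -> s < B ^ v -> digitn B v (q * B ^ v + s) = q.
Proof.
move=> qB sv; have B0 : 0 < B by apply: leq_ltn_trans qB.
rewrite /digitn divnMDl ?expn_gt0 ?B0 //.
by rewrite divn_small // addn0 modn_small.
Qed.

Lemma digit_small B j s : s < B ^ j -> digitn B j s = 0.
Proof. by move=> h; rewrite /digitn divn_small // mod0n. Qed.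

Lemma pig (B : nat) (zs : seq nat) : size zs < B ->
  exists2 t, t < B & forall z, z \in zs -> (z + t) %% B != B.-1.
Proof.
move=> hs; have B0 : 0 < B by case: (B) hs.
pose g z := (B.*2.-1 - z %% B) %% B.
have gP z : (z + g z) %% B = B.-1.
  rewrite /g modnDmr -modnDml.
  have hz := ltn_pmod z B0.
  have -> : z %% B + (B.*2.-1 - z %% B) = B.-1 + B by lia.
  by rewrite modnDr modn_small // prednK.
case: (boolP (seq.all (fun t => t \in map g zs) (seq.iota 0 B))) => [/allP hall|].
  have := uniq_leq_size (seq.iota_uniq 0 B) hall.
  by rewrite size_iota size_map leqNgt hs.
rewrite -has_predC => /hasP [t]; rewrite mem_iota add0n /= => tB tn.
exists t => // z zin; apply/eqP => e.
move/negP: tn; apply; apply/mapP; exists z => //.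
have : (z + t == z + g z %[mod B]) by rewrite e gP.
rewrite eqn_modDl => /eqP; rewrite modn_small // modn_small //.
by rewrite /g ltn_pmod.
Qed.

Lemma low B (Ys : seq nat) : size Ys < B -> forall w,
  exists2 r, r < B ^ w & forall Y, Y \in Ys -> forall j, j < w -> digitn B j (Y + r) != B.-1.
Proof.
move=> hs; have B0 : 0 < B by case: (B) hs.
elim=> [|w [r rw hr]]; first by exists 0.
have hsz : size (map (fun Y => (Y + r) %/ B ^ w) Ys) < B by rewrite size_map.
have [t tB ht] := @pig B _ hsz.
exists (r + t * B ^ w).
  rewrite expnSr.
  have : t <= B.-1 by rewrite -ltnS prednK.
  nia.
move=> Y YY j; rewrite ltnS leq_eqVlt => /orP [/eqP ->|jw].
  rewrite addnA /digitn divnDMl ?expn_gt0 ?B0 //.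
  by apply: ht; apply: map_f.
by rewrite addnA digit_low // hr.
Qed.

Definition Pd (B : nat) (x : int) : pred nat :=
  fun j => digitn B j (absz (x %% (B ^ j.+1)%:Z)%Z) == B.-1.

Definition Dg (B : nat) (x : int) : nat :=
  match excluded_middle_informative (exists j, Pd B x j) with
  | left h => ex_minn h
  | right _ => 0
  end.

Lemma Dg_eq B x v : Pd B x v -> (forall j, j < v -> ~~ Pd B x j) -> Dg B x = v.
Proof.
move=> hv hlt; rewrite /Dg; case: excluded_middle_informative => [h|h];
  last by exfalso; apply: h; exists v.
case: ex_minnP => m hm hmin; apply/eqP; rewrite eqn_leq hmin //=.
by rewrite leqNgt; apply/negP => mv; move: (hlt m mv); rewrite hm.
Qed.

Lemma digz_congr B M j (x : int) (X : nat) : 0 < B -> j < M -> (((B ^ M)%:Z) %| (x - X%:Z)%R)%Z ->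
  digitn B j (absz (x %% (B ^ j.+1)%:Z)%Z) = digitn B j X.
Proof.
move=> B0 jM hd.
have -> : (x %% (B ^ j.+1)%:Z)%Z = (X%:Z %% (B ^ j.+1)%:Z)%Z.
  by apply/eqP; rewrite eqz_mod_dvd; apply: dvdz_trans hd; rewrite dvdzE /= dvdn_exp2l.
by rewrite modz_nat absz_nat /digitn expnS !modn_divl modn_mod.
Qed.

Local Open Scope ring_scope.

Theorem corollary3p9 :
  forall n : nat, (0 < n)%N ->
  exists f : int -> nat,
    forall l d : nat, exists m : nat,
      forall p : 'I_n -> int,
        (forall k k' : 'I_n, (k < k')%N -> `|p k - p k'| <= d%:Z) ->
        exists2 i : nat, (i < m)%N & forall k : 'I_n, f (p k + i%:Z) = l.
Proof.
move=> n n0.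
pose B := n.+3.
have B0 : (0 < B)%N by [].
exists (fun x => logn 2 (Dg B x).+1).
move=> l d.
pose w := d. pose v := ((2 ^ l * (w.*2 + 5)).-1)%N.
exists (B ^ v.+1 + B ^ w)%N.
move=> p hp.
pose a := p (Ordinal n0).
have hd k : `|p k - a| <= d%:Z.
  case: (posnP k) => [k0|kpos].
    have -> : k = Ordinal n0 by apply: val_inj.
    by rewrite subrr normr0.
  by have := hp (Ordinal n0) k kpos; rewrite distrC.
have Bw : (d < B ^ w)%N by apply: ltn_expl.
pose s0 k := absz ((B ^ w)%:Z + (p k - a)).
have s0E k : (s0 k)%:Z = (B ^ w)%:Z + (p k - a).
  rewrite gez0_abs //; have := hd k; move: Bw; rewrite -ltz_nat; lia.
have s0lt k : (s0 k < 2 * B ^ w)%N.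
  rewrite -ltz_nat s0E; have := hd k; move: Bw; rewrite -ltz_nat; lia.
pose Y k := (B.-1 * B ^ v + s0 k)%N.
have hsz : (size (map Y (enum 'I_n)) < B)%N by rewrite size_map size_enum_ord /B; lia.
have [r rw hr] := @low B _ hsz w.
pose E := (B.-1 * B ^ v + B ^ w)%N.
pose i1 := absz ((E%:Z - a) %% (B ^ v.+1)%:Z)%Z.
have Mpos : (0 < B ^ v.+1)%N by rewrite expn_gt0.
have i1E : i1%:Z = ((E%:Z - a) %% (B ^ v.+1)%:Z)%Z.
  by rewrite gez0_abs // modz_ge0 // -lt0n.
have i1lt : (i1 < B ^ v.+1)%N.
  by rewrite -ltz_nat i1E ltz_pmod // ltz_nat.
exists (i1 + r)%N; first by lia.
move=> k.
have cong : ((B ^ v.+1)%:Z %| (p k + (i1 + r)%N%:Z) - (Y k + r)%N%:Z)%Z.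
  have -> : (p k + (i1 + r)%N%:Z) - (Y k + r)%N%:Z = i1%:Z - (E%:Z - a).
    rewrite /Y /E !PoszD s0E; ring.
  by rewrite i1E -eqz_mod_dvd modz_mod.
have dig j : (j <= v)%N -> Pd B (p k + (i1 + r)%N%:Z) j = (digitn B j (Y k + r) == B.-1).
  by move=> jv; rewrite /Pd (@digz_congr B v.+1 j _ (Y k + r)%N).
have sk : (s0 k + r < B ^ w.+1)%N.
  have := s0lt k; rewrite expnSr; nia.
have wv : (w.+1 <= v)%N.
  have : (0 < 2 ^ l)%N by rewrite expn_gt0.
  rewrite /v; nia.
have sv : (s0 k + r < B ^ v)%N.
  by apply: (leq_trans sk); apply: leq_pexp2l.
have YE : (Y k + r = B.-1 * B ^ v + (s0 k + r))%N by rewrite /Y addnA.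
rewrite (@Dg_eq B _ v).
- have -> : v.+1 = (2 ^ l * (w.*2 + 5))%N by rewrite /v prednK // muln_gt0 expn_gt0 addn_gt0 orbT.
  rewrite lognM ?expn_gt0 ?addn_gt0 ?orbT //.
  rewrite (@pfactorK 2 l) // logn_coprime ?addn0 //.
  by rewrite coprime2n oddD odd_double.
- by rewrite dig // YE digit_top // prednK.
move=> j jv; rewrite dig; last exact: ltnW.
case: (ltnP j w) => [jw|wj].
  by apply: hr => //; rewrite map_f ?mem_enum.
rewrite YE addnC digit_low //.
move: wj; rewrite leq_eqVlt => /orP [/eqP wj|wj].
  rewrite -wj /digitn.
  have h3 : ((s0 k + r) %/ B ^ w < 3)%N.
    by rewrite ltn_divLR ?expn_gt0 //; have := s0lt k; lia.
  rewrite modn_small; last by apply: (leq_trans h3); rewrite /B; lia.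
  by apply/eqP => e; move: h3; rewrite e /B; lia.
rewrite digit_small //.
by apply: (leq_trans sk); apply: leq_pexp2l.
Qed.
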